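(* Let $r,I_1,I_2$ be positive integers with $r\le I_1I_2$. Let $\Psi=(\Gamma_1,\dots,\Gamma_r)$ and $\Psi'=(\Gamma'_1,\dots,\Gamma'_r)$ be tripartite states of format $r\times I_1\times I_2$ such that $\Gamma_1,\dots,\Gamma_r$ are linearly independent and $\Gamma'_1,\dots,\Gamma'_r$ are linearly independent. Choose complementary states $\overline{\Psi}=(\Gamma_{r+1},\dots,\Gamma_{I_1I_2})$ and $\overline{\Psi}'=(\Gamma'_{r+1},\dots,\Gamma'_{I_1I_2})$. Form the invertible $I_1I_2\times I_1I_2$ matrices $U=(\mathcal V(\Gamma_1),\dots,\mathcal V(\Gamma_{I_1I_2}))$ and $U'=(\mathcal V(\Gamma'_1),\dots,\mathcal V(\Gamma'_{I_1I_2}))$. Then $\Psi'$ and $\Psi$ are SLOCC equivalent if and only if there exist an invertible $P\in\mathbb C^{r\times r}$, an invertible $\overline P\in\mathbb C^{(I_1I_2-r)\times(I_1I_2-r)}$ and an arbitrary $Y\in\mathbb C^{r\times(I_1I_2-r)}$ such that, with $$\widetilde P=\begin{pmatrix}P&Y\\0&\overline P\end{pmatrix},$$ we have $$\operatorname{rank}\,\mathcal R\big(U\widetilde P\,U'^{-1}\big)=1 .$$ Equivalently, $U\widetilde P\,U'^{-1}$ is a Kronecker product $C\otimes B$ with $C\in\mathbb C^{I_2\times I_2}$ and $B\in\mathbb C^{I_1\times I_1}$. When $r=I_1I_2$, there are no complementary states and $\widetilde P=P$.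
   Context: **Tripartite states as tuples.** A tripartite (not necessarily normalized) state of format $r\times I_1\times I_2$ is written as a tuple $\Psi=(\Gamma_1,\dots,\Gamma_r)$ with $\Gamma_k\in\mathbb C^{I_1\times I_2}$. It stands for the vector $$\sum_{k=1}^r\sum_{i_1,i_2}(\Gamma_k)_{i_1i_2}\,|k\rangle|i_1\rangle|i_2\rangle\in\mathbb C^r\otimes\mathbb C^{I_1}\otimes\mathbb C^{I_2}.$$ **SLOCC equivalence.** Two states $|\Psi'\rangle,|\Psi\rangle$ of $N$ parties are SLOCC equivalent if $|\Psi'\rangle=A_1\otimes\cdots\otimes A_N|\Psi\rangle$ for some invertible matrices $A_j$. For tuples this reads: there are invertible $P_0\in\mathbb C^{r\times r}$, $A_1\in\mathbb C^{I_1\times I_1}$ and $A_2\in\mathbb C^{I_2\times I_2}$ with $$\Gamma'_k=\sum_l (P_0)_{kl}\,A_1\Gamma_lA_2^{\mathrm T}\quad\text{for all }k.$$ **Vectorization.** For $\Gamma\in\mathbb C^{I_1\times I_2}$, $\mathcal V(\Gamma)\in\mathbb C^{I_1I_2}$ is the column-stacking vectorization $(\Gamma_{11},\dots,\Gamma_{I_11},\Gamma_{12},\dots,\Gamma_{I_1I_2})^{\mathrm T}$. It satisfies $\mathcal V(B\Gamma C^{\mathrm T})=(C\otimes B)\mathcal V(\Gamma)$. **Complementary state.** If $\Gamma_1,\dots,\Gamma_r$ are linearly independent, a complementary state of $(\Gamma_1,\dots,\Gamma_r)$ is any tuple $(\Gamma_{r+1},\dots,\Gamma_{I_1I_2})$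 of matrices in $\mathbb C^{I_1\times I_2}$ such that $\Gamma_1,\dots,\Gamma_{I_1I_2}$ form a basis of $\mathbb C^{I_1\times I_2}$. **Realignment.** Partition an $I_1I_2\times I_1I_2$ matrix $M$ into an $I_2\times I_2$ array of blocks $M_{ij}\in\mathbb C^{I_1\times I_1}$. Then $$\mathcal R(M)=\big(\mathcal V(M_{11}),\dots,\mathcal V(M_{I_21}),\mathcal V(M_{12}),\dots,\mathcal V(M_{I_2I_2})\big)^{\mathrm T}\in\mathbb C^{I_2^2\times I_1^2}.$$ With this convention, $\mathcal R(M)$ has rank $1$ exactly when $M=C\otimes B$ with $C\in\mathbb C^{I_2\times I_2}$, $B\in\mathbb C^{I_1\times I_1}$ and $M\neq 0$. *)

(* Defs.v *)
From HB Require Import structures.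
From mathcomp Require Import all_boot all_order all_algebra.
Set Implicit Arguments. Unset Strict Implicit. Unset Printing Implicit Defensive.
Import Order.TTheory GRing.Theory Num.Theory.
Local Open Scope ring_scope.

(* 0-based column-stacking index: (a, b) |-> a + m * b, in 'I_(m * n). *)
Lemma vidx_subproof (m n : nat) (a : 'I_m) (b : 'I_n) : (a + m * b < m * n)%N.
Proof.
have H1 : (a + m * b < m + m * b)%N by rewrite ltn_add2r.
apply: (leq_trans H1); rewrite -mulnS leq_mul2l; apply/orP; right; exact: ltn_ord b.
Qed.

Definition vidx (m n : nat) (a : 'I_m) (b : 'I_n) : 'I_(m * n) :=
  Ordinal (vidx_subproof a b).

(* inverse of vidx (always Some, vidx being a bijection) *)
Definition unvidx (m n : nat) (k : 'I_(m * n)) : option ('I_m * 'I_n) :=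
  [pick ab : 'I_m * 'I_n | vidx ab.1 ab.2 == k].

Section Defs.
Variable K : fieldType.

Definition vecV (I1 I2 : nat) (G : 'M[K]_(I1, I2)) : 'cV[K]_(I1 * I2) :=
  \col_k (if unvidx k is Some ab then G ab.1 ab.2 else 0).

(* Kronecker product C (x) B, C : I2 x I2 (outer), B : I1 x I1 (inner). *)
Definition kron (I1 I2 : nat) (C : 'M[K]_I2) (B : 'M[K]_I1) : 'M[K]_(I1 * I2) :=
  \matrix_(p, q) (if unvidx p is Some ai then
                   if unvidx q is Some bj then C ai.2 bj.2 * B ai.1 bj.1 else 0
                 else 0).

(* Realignment: block M_ij (i,j < I2), entry (a,b) is M (a + I1 i) (b + I1 j);
   R(M) has row i + I2 j equal to V(M_ij)^T. *)
Definition realign (I1 I2 : nat) (M : 'M[K]_(I1 * I2)) : 'M[K]_(I2 * I2, I1 * I1) :=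
  \matrix_(p, q) (if unvidx p is Some ij then
                   if unvidx q is Some ab then
                     M (vidx ab.1 ij.1) (vidx ab.2 ij.2) else 0
                 else 0).

Definition slocc (r I1 I2 : nat) (G' G : 'I_r -> 'M[K]_(I1, I2)) : Prop :=
  exists (P0 : 'M[K]_r) (A1 : 'M[K]_I1) (A2 : 'M[K]_I2),
    [/\ P0 \in unitmx, A1 \in unitmx, A2 \in unitmx &
        forall k, G' k = \sum_l P0 k l *: (A1 *m G l *m A2^T)].

Definition tseq (r I1 I2 : nat) (G : 'I_r -> 'M[K]_(I1, I2)) : seq 'M[K]_(I1, I2) :=
  [seq G k | k <- enum 'I_r].

Definition complementary (r I1 I2 : nat) (G : 'I_r -> 'M[K]_(I1, I2))
  (Gb : 'I_(I1 * I2 - r) -> 'M[K]_(I1, I2)) : bool :=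
  basis_of fullv (tseq G ++ tseq Gb).

Definition Umx0 (r I1 I2 : nat) (G : 'I_r -> 'M[K]_(I1, I2))
  (Gb : 'I_(I1 * I2 - r) -> 'M[K]_(I1, I2)) : 'M[K]_(I1 * I2, r + (I1 * I2 - r)) :=
  row_mx (\matrix_(p, k) vecV (G k) p 0) (\matrix_(p, k) vecV (Gb k) p 0).

Definition Ptilde (r m : nat) (P : 'M[K]_r) (Y : 'M[K]_(r, m)) (Pb : 'M[K]_m)
  : 'M[K]_(r + m) := block_mx P Y 0 Pb.

Definition UPU (r I1 I2 : nat) (hr : (r <= I1 * I2)%N)
  (G Gp : 'I_r -> 'M[K]_(I1, I2)) (Gb Gbp : 'I_(I1 * I2 - r) -> 'M[K]_(I1, I2))
  (P : 'M[K]_r) (Y : 'M[K]_(r, I1 * I2 - r)) (Pb : 'M[K]_(I1 * I2 - r))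
  : 'M[K]_(I1 * I2) :=
  castmx (erefl _, subnKC hr) (Umx0 G Gb *m Ptilde P Y Pb)
  *m invmx (castmx (erefl _, subnKC hr) (Umx0 Gp Gbp)).

End Defs.

(* Main.v *)
Require Import Defs.
From HB Require Import structures.
From mathcomp Require Import all_boot all_order all_algebra.
Set Implicit Arguments. Unset Strict Implicit. Unset Printing Implicit Defensive.
Import Order.TTheory GRing.Theory Num.Theory.
Local Open Scope ring_scope.

Lemma vidx_inj (m n : nat) : injective (fun ab : 'I_m * 'I_n => vidx ab.1 ab.2).
Proof.
move=> [a b] [a' b'] /= /(congr1 val) /= H.
have hm : (0 < m)%N by case: m a {H a'} => [[]|].
have Ha : a = a' :> nat.
  by move: (congr1 (modn^~ m) H) => /=; rewrite !(addnC _ (m * _))%N !(mulnC m) !modnMDl !modn_small.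
have Hb : b = b' :> nat.
  move: H; rewrite Ha => /addnI /eqP; rewrite eqn_mul2l => /orP[|/eqP //].
  by rewrite eqn0Ngt hm.
by congr pair; apply: val_inj.
Qed.

Lemma vidx_bij (m n : nat) : bijective (fun ab : 'I_m * 'I_n => vidx ab.1 ab.2).
Proof.
apply: inj_card_bij; first exact: vidx_inj.
by rewrite card_prod !card_ord.
Qed.

Lemma vidx_surj (m n : nat) (k : 'I_(m * n)) : exists a b, k = vidx a b.
Proof.
have [g _ gK] := vidx_bij m n.
by exists (g k).1, (g k).2; rewrite gK.
Qed.

Lemma unvidxE (m n : nat) (a : 'I_m) (b : 'I_n) : unvidx (vidx a b) = Some (a, b).
Proof.
rewrite /unvidx; case: pickP => [[a' b'] /eqP H|/(_ (a, b))]; last by rewrite eqxx.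
by congr Some; apply: (@vidx_inj m n); rewrite /= H.
Qed.

Lemma sum_vidx (R : nmodType) (m n : nat) (F : 'I_(m * n) -> R) :
  \sum_k F k = \sum_a \sum_b F (vidx a b).
Proof.
rewrite (reindex _ (onW_bij _ (vidx_bij m n))) /=.
by rewrite pair_bigA.
Qed.
Section K.
Variable K : fieldType.

Lemma vecV_vidx I1 I2 (X : 'M[K]_(I1, I2)) a b : vecV X (vidx a b) 0 = X a b.
Proof. by rewrite mxE unvidxE. Qed.

Lemma kron_vidx I1 I2 (C : 'M[K]_I2) (B : 'M[K]_I1) a i b j :
  kron C B (vidx a i) (vidx b j) = C i j * B a b.
Proof. by rewrite mxE !unvidxE. Qed.

Lemma vidx_eq (m n : nat) (a b : 'I_m) (i j : 'I_n) :
  (vidx a i == vidx b j) = (a == b) && (i == j).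
Proof.
apply/eqP/andP => [H|[/eqP-> /eqP->] //].
by have [-> ->] : (a, i) = (b, j) by apply: (@vidx_inj m n).
Qed.

Lemma vecV_inj I1 I2 : injective (@vecV K I1 I2).
Proof.
move=> X Y H; apply/matrixP => a b.
by rewrite -!(vecV_vidx _ a b) H.
Qed.

Lemma vecV_mul I1 I2 (B : 'M[K]_I1) (X : 'M[K]_(I1, I2)) (C : 'M[K]_I2) :
  vecV (B *m X *m C^T) = kron C B *m vecV X.
Proof.
apply/colP => k; have [a [i ->]] := vidx_surj k.
rewrite vecV_vidx !mxE sum_vidx. idtac.
rewrite (eq_bigr (fun j => \sum_b B a b * X b j * C i j)); last first.
  by move=> j _; rewrite mxE big_distrl; apply: eq_bigr => b _; rewrite mxE.
rewrite exchange_big /=; apply: eq_bigr => b _; apply: eq_bigr => j _.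
by rewrite kron_vidx vecV_vidx mulrC mulrA.
Qed.

Lemma vecV_sum I1 I2 r (c : 'I_r -> K) (X : 'I_r -> 'M[K]_(I1, I2)) :
  vecV (\sum_l c l *: X l) = \sum_l c l *: vecV (X l).
Proof.
apply/colP => k; have [a [i ->]] := vidx_surj k.
rewrite vecV_vidx !summxE; apply: eq_bigr => l _.
by rewrite mxE [in RHS]mxE vecV_vidx.
Qed.

Lemma kron_mul I1 I2 (C C' : 'M[K]_I2) (B B' : 'M[K]_I1) :
  kron C B *m kron C' B' = kron (C *m C') (B *m B').
Proof.
apply/matrixP => p q.
have [a [i ->]] := vidx_surj p; have [b [j ->]] := vidx_surj q.
rewrite kron_vidx !mxE sum_vidx exchange_big big_distrl /=.
apply: eq_bigr => j' _; rewrite big_distrr /=; apply: eq_bigr => b' _.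
by rewrite !kron_vidx mulrACA.
Qed.

Lemma kron1 I1 I2 : kron (1%:M : 'M[K]_I2) (1%:M : 'M[K]_I1) = 1%:M.
Proof.
apply/matrixP => p q.
have [a [i ->]] := vidx_surj p; have [b [j ->]] := vidx_surj q.
rewrite kron_vidx !mxE vidx_eq.
by case: (a == b); case: (i == j); rewrite ?mulr1 ?mulr0 ?mul0r.
Qed.

Lemma kron_tr I1 I2 (C : 'M[K]_I2) (B : 'M[K]_I1) : (kron C B)^T = kron C^T B^T.
Proof.
apply/matrixP => p q.
have [a [i ->]] := vidx_surj p; have [b [j ->]] := vidx_surj q.
by rewrite mxE !kron_vidx !mxE.
Qed.

Lemma kron_unit I1 I2 (C : 'M[K]_I2) (B : 'M[K]_I1) :
  C \in unitmx -> B \in unitmx -> kron C B \in unitmx.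
Proof.
move=> uC uB.
have := @mulmx1_unit _ _ (kron C B) (kron (invmx C) (invmx B)).
by rewrite !kron_mul !mulmxV ?kron1 // => /(_ erefl) [].
Qed.

End K.
Goal True.
Abort.
Section K2.
Variable K : fieldType.

Lemma not_unit_ker n (A : 'M[K]_n) :
  A \notin unitmx -> exists2 u : 'rV_n, u != 0 & u *m A = 0.
Proof.
rewrite -row_free_unit -kermx_eq0 => nz.
case: (pickP (fun i => row i (kermx A) != 0)) => [i Hi | H].
  by exists (row i (kermx A)) => //; rewrite -row_mul mulmx_ker row0.
case/negP: nz; apply/eqP/row_matrixP => i; rewrite row0.
by move: (H i) => /negbFE /eqP.
Qed.

Lemma vecV0 I1 I2 : vecV (0 : 'M[K]_(I1, I2)) = 0.
Proof.
apply/colP => k; have [a [i ->]] := vidx_surj k.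
by rewrite vecV_vidx !mxE.
Qed.

Lemma vecV_trmul I1 I2 (B : 'M[K]_I1) (X : 'M[K]_(I1, I2)) (C : 'M[K]_I2) :
  (vecV X)^T *m kron C B = (vecV (B^T *m X *m C))^T.
Proof. by rewrite -[C in RHS]trmxK vecV_mul -kron_tr trmx_mul trmxK. Qed.

Lemma kron_zero_unit I1 I2 (B : 'M[K]_I1) (X : 'M[K]_(I1, I2)) (C : 'M[K]_I2) :
  kron C B \in unitmx -> B^T *m X *m C = 0 -> X = 0.
Proof.
move=> uk H0.
have : (vecV X)^T *m kron C B = 0 by rewrite vecV_trmul H0 vecV0 trmx0.
move=> /(congr1 (mulmx^~ (invmx (kron C B)))); rewrite mulmxK // mul0mx.
move=> /(congr1 trmx); rewrite trmxK trmx0 -(vecV0 I1 I2).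
exact: vecV_inj.
Qed.

Lemma kron_unitK I1 I2 (C : 'M[K]_I2) (B : 'M[K]_I1) :
  (0 < I1)%N -> (0 < I2)%N ->
  kron C B \in unitmx -> C \in unitmx /\ B \in unitmx.
Proof.
move=> h1 h2 uk; split; apply/negPn/negP => /not_unit_ker [u unz uA].
- pose a0 : 'I_I1 := Ordinal h1.
  pose X : 'M[K]_(I1, I2) := \matrix_(a, i) ((a == a0)%:R * u 0 i).
  have XC : X *m C = 0.
    apply/matrixP => a i; rewrite !mxE.
    under eq_bigr do rewrite mxE -mulrA.
    rewrite -big_distrr /=.
    by have := congr1 (fun M : 'M[K]_(1, I2) => M 0 i) uA; rewrite !mxE => ->; rewrite mulr0.
  have X0 : X = 0 by apply: (kron_zero_unit uk); rewrite -mulmxA XC mulmx0.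
  case/negP: unz; apply/eqP/rowP => i.
  by move/matrixP: X0 => /(_ a0 i); rewrite !mxE eqxx mul1r => ->.
- pose i0 : 'I_I2 := Ordinal h2.
  pose X : 'M[K]_(I1, I2) := \matrix_(a, i) (u 0 a * (i == i0)%:R).
  have BX : B^T *m X = 0.
    apply/matrixP => b i; rewrite !mxE.
    under eq_bigr do rewrite !mxE mulrA.
    rewrite -big_distrl /=.
    have := congr1 (fun M : 'M[K]_(1, I1) => M 0 b) uA; rewrite !mxE.
    under eq_bigr do rewrite mulrC.
    by move=> ->; rewrite mul0r.
  have X0 : X = 0 by apply: (kron_zero_unit uk); rewrite BX mul0mx.
  case/negP: unz; apply/eqP/rowP => a.
  by move/matrixP: X0 => /(_ a i0); rewrite !mxE eqxx mulr1 => ->.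
Qed.

End K2.
Section K3.
Variable K : fieldType.

Lemma realign_vidx I1 I2 (M : 'M[K]_(I1 * I2)) i j a b :
  realign M (vidx i j) (vidx a b) = M (vidx a i) (vidx b j).
Proof. by rewrite mxE !unvidxE. Qed.

Lemma realign_kron I1 I2 (C : 'M[K]_I2) (B : 'M[K]_I1) :
  realign (kron C B) = vecV C *m (vecV B)^T.
Proof.
apply/matrixP => p q.
have [i [j ->]] := vidx_surj p; have [a [b ->]] := vidx_surj q.
by rewrite realign_vidx kron_vidx [RHS]mxE big_ord1 !mxE !unvidxE.
Qed.

Lemma realign_eq0 I1 I2 (M : 'M[K]_(I1 * I2)) : realign M = 0 -> M = 0.
Proof.
move=> H; apply/matrixP => p q.
have [a [i ->]] := vidx_surj p; have [b [j ->]] := vidx_surj q.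
by rewrite -realign_vidx H !mxE.
Qed.

Lemma mul_cast1 m n k (e : k = 1%N) (A : 'M[K]_(m, k)) (B : 'M[K]_(k, n)) :
  A *m B = castmx (erefl m, e) A *m castmx (e, erefl n) B.
Proof. by subst k; rewrite !castmx_id. Qed.

Lemma realign_rank1 I1 I2 (M : 'M[K]_(I1 * I2)) :
  \rank (realign M) = 1%N -> exists C B, M = kron C B.
Proof.
move=> hr; have := mulmx_base (realign M); rewrite (mul_cast1 hr).
set u := castmx _ (col_base _); set v := castmx _ (row_base _) => Hm.
exists (\matrix_(i, j) u (vidx i j) 0), (\matrix_(a, b) v 0 (vidx a b)).
apply/matrixP => p q.
have [a [i ->]] := vidx_surj p; have [b [j ->]] := vidx_surj q.
by rewrite kron_vidx -realign_vidx -Hm !mxE big_ord1.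
Qed.

Lemma rank_realign_kron I1 I2 (C : 'M[K]_I2) (B : 'M[K]_I1) :
  kron C B != 0 -> \rank (realign (kron C B)) = 1%N.
Proof.
move=> nz; apply/eqP; rewrite eqn_leq; apply/andP; split.
  by rewrite realign_kron; apply: leq_trans (mxrankM_maxl _ _) (rank_leq_col _).
rewrite lt0n mxrank_eq0; apply/eqP => /realign_eq0 H.
by rewrite H eqxx in nz.
Qed.

End K3.
Section K4.
Variable K : fieldType.

Lemma block_unit r m (P : 'M[K]_r) (Y : 'M[K]_(r, m)) (Pb : 'M[K]_m) :
  (block_mx P Y 0 Pb \in unitmx) = (P \in unitmx) && (Pb \in unitmx).
Proof. by rewrite !unitmxE det_ublock unitrM. Qed.

Lemma core (r m n : nat) (e : (r + m)%N = n) (W1 W1' : 'M[K]_(n, r))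
  (W2 W2' : 'M[K]_(n, m)) (M : 'M[K]_n) :
  castmx (erefl n, e) (row_mx W1 W2) \in unitmx ->
  castmx (erefl n, e) (row_mx W1' W2') \in unitmx ->
  ((M \in unitmx /\ exists Q : 'M[K]_r, M *m W1' = W1 *m Q) ->
   exists P Pb Y, [/\ P \in unitmx, Pb \in unitmx &
      castmx (erefl n, e) (row_mx W1 W2 *m Ptilde P Y Pb)
        *m invmx (castmx (erefl n, e) (row_mx W1' W2')) = M])
  /\
  (forall P Pb Y, P \in unitmx -> Pb \in unitmx ->
      castmx (erefl n, e) (row_mx W1 W2 *m Ptilde P Y Pb)
        *m invmx (castmx (erefl n, e) (row_mx W1' W2')) = M ->
      M \in unitmx /\ M *m W1' = W1 *m P).
Proof.
subst n; rewrite !castmx_id /Ptilde.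
set U := row_mx W1 W2; set U' := row_mx W1' W2' => uU uU'; split.
  move=> [uM [Q HQ]].
  pose Pt := invmx U *m M *m U'.
  have HU1 : invmx U *m W1 = col_mx 1%:M 0.
    have := mulVmx uU; rewrite /U mul_mx_row scalar_mx_block block_mxEh.
    by case/eq_row_mx.
  have lP : lsubmx Pt = col_mx Q 0.
    by rewrite /Pt mul_mx_row row_mxKl -mulmxA HQ mulmxA HU1 mul_col_mx mul1mx mul0mx.
  have ePt : Pt = block_mx Q (usubmx (rsubmx Pt)) 0 (dsubmx (rsubmx Pt)).
    by rewrite block_mxEh -lP vsubmxK hsubmxK.
  have uPt : Pt \in unitmx by rewrite !unitmx_mul unitmx_inv uU uM uU'.
  move: uPt; rewrite ePt block_unit => /andP[uQ uPb].
  exists Q, (dsubmx (rsubmx Pt)), (usubmx (rsubmx Pt)); split => //.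
  by rewrite -ePt /Pt !mulmxA mulmxV // mul1mx mulmxK.
move=> P Pb Y uP uPb H.
have uPt : block_mx P Y 0 Pb \in unitmx by rewrite block_unit uP uPb.
have uM : M \in unitmx by rewrite -H !unitmx_mul unitmx_inv uU uU' uPt.
split => //.
have : M *m U' = U *m block_mx P Y 0 Pb by rewrite -H mulmxKV.
move=> /(congr1 lsubmx); rewrite /U' mul_mx_row row_mxKl => ->.
by rewrite block_mxEh mul_mx_row row_mxKl /U mul_row_col mulmx0 addr0.
Qed.

End K4.
Section K5.
Variable K : fieldType.

Definition Wm r I1 I2 (G : 'I_r -> 'M[K]_(I1, I2)) : 'M[K]_(I1 * I2, r) :=
  \matrix_(p, k) vecV (G k) p 0.

Lemma E1 r I1 I2 (Gp : 'I_r -> 'M[K]_(I1, I2)) C B p k :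
  (kron C B *m Wm Gp) p k = vecV (B *m Gp k *m C^T) p 0.
Proof.
rewrite vecV_mul !mxE; apply: eq_bigr => q _; by rewrite !mxE.
Qed.

Lemma E2 r s I1 I2 (G : 'I_r -> 'M[K]_(I1, I2)) (P : 'M[K]_(r, s)) p k :
  (Wm G *m P) p k = vecV (\sum_l P l k *: G l) p 0.
Proof.
rewrite vecV_sum summxE mxE; apply: eq_bigr => l _; by rewrite !mxE mulrC.
Qed.

Lemma KC r I1 I2 (G Gp : 'I_r -> 'M[K]_(I1, I2)) C B (P : 'M[K]_r) :
  kron C B *m Wm Gp = Wm G *m P <->
  (forall k, B *m Gp k *m C^T = \sum_l P l k *: G l).
Proof.
split => [H k|H].
  apply: vecV_inj; apply/colP => p.
  by rewrite -E1 -E2 H.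
by apply/matrixP => p k; rewrite E1 E2 H.
Qed.

Lemma vecV_add I1 I2 (X Y : 'M[K]_(I1, I2)) : vecV (X + Y) = vecV X + vecV Y.
Proof.
apply/colP => k; have [a [i ->]] := vidx_surj k.
by rewrite [RHS]mxE !vecV_vidx mxE.
Qed.

Lemma free_sum0 (vT : vectType K) N (s : seq vT) (hs : size s = N) :
  free s -> forall c : 'I_N -> K, \sum_(i < N) c i *: s`_i = 0 -> forall i, c i = 0.
Proof.
subst N => fs c H i.
have /freeP Hf : free (in_tuple s) by [].
exact: (Hf c H i).
Qed.

Lemma tseq_nth r I1 I2 (G : 'I_r -> 'M[K]_(I1, I2)) (i : 'I_r) : (tseq G)`_i = G i.
Proof. by rewrite /tseq (nth_map i) ?size_enum_ord // nth_ord_enum. Qed.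

Lemma size_tseq r I1 I2 (G : 'I_r -> 'M[K]_(I1, I2)) : size (tseq G) = r.
Proof. by rewrite /tseq size_map size_enum_ord. Qed.

Lemma cast_unit n a (e : a = n) (A : 'M[K]_(n, a)) :
  (forall y : 'cV_a, A *m y = 0 -> y = 0) -> castmx (erefl n, e) A \in unitmx.
Proof.
subst a; rewrite castmx_id => H.
rewrite -unitmx_tr -row_free_unit; apply: inj_row_free => v Hv.
have : A *m v^T = 0 by rewrite -[LHS]trmxK trmx_mul trmxK Hv trmx0.
by move/H => /(congr1 trmx); rewrite trmxK trmx0.
Qed.

Lemma U_unit r I1 I2 (hr : (r <= I1 * I2)%N) (G : 'I_r -> 'M[K]_(I1, I2))
  (Gb : 'I_(I1 * I2 - r) -> 'M[K]_(I1, I2)) :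
  complementary G Gb -> castmx (erefl (I1 * I2), subnKC hr) (Umx0 G Gb) \in unitmx.
Proof.
move=> hGb; apply: cast_unit => y H.
have H0 : \sum_l usubmx y l 0 *: G l + \sum_l dsubmx y l 0 *: Gb l = 0.
  apply: vecV_inj; rewrite vecV_add vecV0 -H -[y in RHS]vsubmxK /Umx0 mul_row_col.
  apply/colP => p; rewrite [RHS]mxE -!/(Wm _) !E2 [LHS]mxE.
  congr (vecV _ p 0 + vecV _ p 0); apply: eq_bigr => l _; by rewrite !mxE.
have hs : size (tseq G ++ tseq Gb) = (r + (I1 * I2 - r))%N by rewrite size_cat !size_tseq.
have := free_sum0 hs (basis_free hGb) (c := fun i => y i 0).
rewrite big_split_ord /= => Hc.
apply/colP => i; rewrite [RHS]mxE; apply: Hc; rewrite -[RHS]H0; congr (_ + _).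
  apply: eq_bigr => l _; rewrite nth_cat size_tseq /= ltn_ord tseq_nth.
  by rewrite mxE.
apply: eq_bigr => l _; rewrite nth_cat size_tseq /= ltnNge leq_addr /= addKn tseq_nth.
by rewrite mxE.
Qed.

End K5.
Section K6.
Variable K : fieldType.

Lemma unit_neq0 n (A : 'M[K]_n) : (0 < n)%N -> A \in unitmx -> A != 0.
Proof.
case: n A => // n A _ uA; apply/eqP => A0; move: uA.
by rewrite A0 unitmxE det0 unitr0.
Qed.

Lemma fw r I1 I2 (hr : (r <= I1 * I2)%N) (G Gp : 'I_r -> 'M[K]_(I1, I2))
  (Gb Gbp : 'I_(I1 * I2 - r) -> 'M[K]_(I1, I2)) :
  complementary G Gb -> complementary Gp Gbp -> slocc Gp G ->
  exists P Pb Y C B, [/\ P \in unitmx, Pb \in unitmx,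
     UPU hr G Gp Gb Gbp P Y Pb = kron C B & kron C B \in unitmx].
Proof.
move=> hGb hGbp [P0 [A1 [A2 [uP0 uA1 uA2 HG]]]].
have uM : kron (invmx A2) (invmx A1) \in unitmx by rewrite kron_unit ?unitmx_inv.
have [c1 _] := @core K r (I1 * I2 - r) (I1 * I2) (subnKC hr) (Wm G) (Wm Gp)
  (Wm Gb) (Wm Gbp) (kron (invmx A2) (invmx A1)) (U_unit hr hGb) (U_unit hr hGbp).
have [|P [Pb [Y [uP uPb HU]]]] := c1.
  split => //; exists P0^T; apply/KC => k.
  rewrite HG mulmx_sumr mulmx_suml; apply: eq_bigr => l _.
  rewrite mxE -scalemxAr -scalemxAl; congr (_ *: _).
  rewrite !mulmxA mulVmx // mul1mx -mulmxA -trmx_mul mulVmx // trmx1 mulmx1 //.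
by exists P, Pb, Y, (invmx A2), (invmx A1); split.
Qed.

Lemma bw r I1 I2 (hr : (r <= I1 * I2)%N) (G Gp : 'I_r -> 'M[K]_(I1, I2))
  (Gb Gbp : 'I_(I1 * I2 - r) -> 'M[K]_(I1, I2)) P Pb Y C B :
  (0 < I1)%N -> (0 < I2)%N ->
  complementary G Gb -> complementary Gp Gbp ->
  P \in unitmx -> Pb \in unitmx ->
  UPU hr G Gp Gb Gbp P Y Pb = kron C B -> slocc Gp G.
Proof.
move=> h1 h2 hGb hGbp uP uPb HU.
have [_ c2] := @core K r (I1 * I2 - r) (I1 * I2) (subnKC hr) (Wm G) (Wm Gp)
  (Wm Gb) (Wm Gbp) (kron C B) (U_unit hr hGb) (U_unit hr hGbp).
have [uM HM] := c2 P Pb Y uP uPb HU.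
have [uC uB] := kron_unitK h1 h2 uM.
move/KC: HM => HK.
exists P^T, (invmx B), (invmx C); split; rewrite ?unitmx_tr ?unitmx_inv // => k.
have -> : Gp k = invmx B *m (B *m Gp k *m C^T) *m (invmx C)^T.
  by rewrite trmx_inv mulmxA mulmxK ?unitmx_tr // mulmxA mulVmx // mul1mx.
rewrite HK mulmx_sumr mulmx_suml; apply: eq_bigr => l _.
by rewrite mxE -scalemxAr -scalemxAl.
Qed.

End K6.

Theorem lemma1 (K : numClosedFieldType) (r I1 I2 : nat)
  (hr0 : (0 < r)%N) (hI1 : (0 < I1)%N) (hI2 : (0 < I2)%N)
  (hr : (r <= I1 * I2)%N)
  (G Gp : 'I_r -> 'M[K]_(I1, I2))
  (Gb Gbp : 'I_(I1 * I2 - r) -> 'M[K]_(I1, I2))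
  (hG : free (tseq G)) (hGp : free (tseq Gp))
  (hGb : complementary G Gb) (hGbp : complementary Gp Gbp) :
  (slocc Gp G <->
     exists (P : 'M[K]_r) (Pb : 'M[K]_(I1 * I2 - r)) (Y : 'M[K]_(r, I1 * I2 - r)),
       [/\ P \in unitmx, Pb \in unitmx &
           \rank (realign (UPU hr G Gp Gb Gbp P Y Pb)) = 1%N])
  /\
  (slocc Gp G <->
     exists (P : 'M[K]_r) (Pb : 'M[K]_(I1 * I2 - r)) (Y : 'M[K]_(r, I1 * I2 - r)),
       [/\ P \in unitmx, Pb \in unitmx &
           exists (C : 'M[K]_I2) (B : 'M[K]_I1),
             UPU hr G Gp Gb Gbp P Y Pb = kron C B]).
Proof.
split; split.
- move=> /(fw hr hGb hGbp) [P [Pb [Y [C [B [uP uPb HU uk]]]]]].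
  exists P, Pb, Y; split => //; rewrite HU; apply: rank_realign_kron.
  by apply: unit_neq0 uk; rewrite muln_gt0 hI1.
- move=> [P [Pb [Y [uP uPb /realign_rank1 [C [B HU]]]]]].
  exact: (bw hI1 hI2 hGb hGbp uP uPb HU).
- move=> /(fw hr hGb hGbp) [P [Pb [Y [C [B [uP uPb HU uk]]]]]].
  by exists P, Pb, Y; split => //; exists C, B.
- move=> [P [Pb [Y [uP uPb [C [B HU]]]]]].
  exact: (bw hI1 hI2 hGb hGbp uP uPb HU).
Qed.
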